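(* Let $\Gamma$ be any cocompact lattice in the Lie group $\mathrm{Sol}^3$. Then $\Gamma$ is not presentable by a product.
   Context: $\mathrm{Sol}^3$ denotes the solvable Lie group $\mathbb{R}^2\rtimes\mathbb{R}$, where $t\in\mathbb{R}$ acts on $\mathbb{R}^2$ by the matrix $\mathrm{diag}(e^t,e^{-t})$ (the Thurston geometry $\mathrm{Sol}^3$). An infinite group $\Gamma$ is not presentable by a product if for every homomorphism $\varphi\colon \Gamma_1\times\Gamma_2\to\Gamma$ whose image has finite index in $\Gamma$, at least one of $\varphi(\Gamma_1)$, $\varphi(\Gamma_2)$ is finite. *)

(* Defs.v *)
From Stdlib Require Import Reals List.
Open Scope R_scope.

(** The Lie group Sol^3 = R^2 ⋊ R, t acting by diag(e^t, e^-t).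
    An element (x, y, t) represents ((x,y), t). *)
Definition Sol : Type := (R * R * R)%type.

Definition sol_mul (g h : Sol) : Sol :=
  let '(x, y, t) := g in
  let '(x', y', s) := h in
  (x + exp t * x', y + exp (- t) * y', t + s).

Definition sol_one : Sol := (0, 0, 0).

Definition sol_inv (g : Sol) : Sol :=
  let '(x, y, t) := g in (- (exp (- t) * x), - (exp t * y), - t).

(** Sup-norm distance on the underlying manifold R^3 (standard topology). *)
Definition sol_dist (g h : Sol) : R :=
  let '(x, y, t) := g in
  let '(x', y', s) := h in
  Rmax (Rabs (x - x')) (Rmax (Rabs (y - y')) (Rabs (t - s))).

Definition is_subgroup (G : Sol -> Prop) : Prop :=
  G sol_one /\
  (forall g h, G g -> G h -> G (sol_mul g h)) /\
  (forall g, G g -> G (sol_inv g)).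

Definition is_discrete (G : Sol -> Prop) : Prop :=
  forall g, G g -> exists eps, 0 < eps /\
    forall h, G h -> sol_dist g h < eps -> h = g.

(** Compact subset of Sol (≅ R^3): closed and bounded (Heine–Borel). *)
Definition sol_closed (K : Sol -> Prop) : Prop :=
  forall g, (forall eps, 0 < eps -> exists k, K k /\ sol_dist g k < eps) -> K g.
Definition sol_bounded (K : Sol -> Prop) : Prop :=
  exists M, forall k, K k -> sol_dist sol_one k <= M.
Definition sol_compact (K : Sol -> Prop) : Prop := sol_closed K /\ sol_bounded K.

(** Cocompact: Sol / G is compact, i.e. Sol = K·G for some compact K. *)
Definition is_cocompact (G : Sol -> Prop) : Prop :=
  exists K, sol_compact K /\ forall g, exists k gam, K k /\ G gam /\ g = sol_mul k gam.

Definition cocompact_lattice (G : Sol -> Prop) : Prop :=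
  is_subgroup G /\ is_discrete G /\ is_cocompact G.

Record Group : Type := {
  gcar :> Type;
  gmul : gcar -> gcar -> gcar;
  gone : gcar;
  ginv : gcar -> gcar;
  gassoc : forall a b c, gmul a (gmul b c) = gmul (gmul a b) c;
  gone_l : forall a, gmul gone a = a;
  ginv_l : forall a, gmul (ginv a) a = gone
}.

Definition sol_finite (A : Sol -> Prop) : Prop :=
  exists l : list Sol, forall g, A g -> In g l.

Definition prod_hom (G1 G2 : Group) (Gam : Sol -> Prop) (phi : G1 * G2 -> Sol) : Prop :=
  (forall p, Gam (phi p)) /\
  forall a b a' b',
    phi (gmul G1 a a', gmul G2 b b') = sol_mul (phi (a, b)) (phi (a', b')).

(** The image of phi has finite index in Gamma: finitely many left cosets cover Gamma. *)
Definition image_finite_index (G1 G2 : Group) (Gam : Sol -> Prop) (phi : G1 * G2 -> Sol) : Prop :=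
  exists reps : list Sol, (forall r, In r reps -> Gam r) /\
    forall gam, Gam gam -> exists r p, In r reps /\ gam = sol_mul r (phi p).

Definition not_presentable_by_product (Gam : Sol -> Prop) : Prop :=
  ~ sol_finite Gam /\
  forall (G1 G2 : Group) (phi : G1 * G2 -> Sol),
    prod_hom G1 G2 Gam phi ->
    image_finite_index G1 G2 Gam phi ->
    sol_finite (fun g => exists a : G1, g = phi (a, gone G2)) \/
    sol_finite (fun g => exists b : G2, g = phi (gone G1, b)).

(* Main.v *)
Require Import Defs.
From Stdlib Require Import Reals List.
From Stdlib Require Import Lra Classical.
Open Scope R_scope.

Lemma exp_le' a b : a <= b -> exp a <= exp b.
Proof. intros [H|H]. apply Rlt_le, exp_increasing; auto. subst; lra. Qed.

Lemma exp_ne1 t : t <> 0 -> 1 - exp t <> 0.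
Proof. intros H E. apply H. apply exp_inv. rewrite exp_0. lra. Qed.

Lemma Rabs_def2b x a : Rabs x <= a -> -a <= x <= a.
Proof. intros H. unfold Rabs in H. destruct (Rcase_abs x); lra. Qed.

Fixpoint sumf (f : Sol -> R) (l : list Sol) : R :=
  match l with nil => 0 | r :: l' => f r + sumf f l' end.

Lemma sumf_in f l r : (forall s, 0 <= f s) -> In r l -> f r <= sumf f l.
Proof.
  intros Hf; induction l as [|s l IH]; simpl. tauto.
  intros [<-|H].
  - assert (0 <= sumf f l). { clear IH. induction l; simpl. lra. specialize (Hf a); lra. } lra.
  - specialize (IH H). specialize (Hf s). lra.
Qed.

Definition xc (g : Sol) : R := fst (fst g).
Definition tc (g : Sol) : R := snd g.

Lemma bound_coords (K : Sol -> Prop) M k : (forall k, K k -> sol_dist sol_one k <= M) ->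
  K k -> Rabs (xc k) <= M /\ Rabs (tc k) <= M.
Proof.
  intros HM Hk. specialize (HM k Hk). destruct k as [[x y] t]. unfold sol_dist, sol_one in HM.
  unfold xc, tc; simpl.
  assert (Rabs (0 - x) <= M) by (eapply Rle_trans; [apply Rmax_l|exact HM]).
  assert (Rabs (0 - t) <= M).
  { eapply Rle_trans; [|exact HM]. eapply Rle_trans; [|apply Rmax_r]. apply Rmax_r. }
  replace (0 - x) with (- x) in * by ring. replace (0 - t) with (- t) in * by ring.
  rewrite Rabs_Ropp in *. auto.
Qed.

Lemma xc_mul g h : xc (sol_mul g h) = xc g + exp (tc g) * xc h.
Proof. destruct g as [[? ?] ?], h as [[? ?] ?]; reflexivity. Qed.
Lemma tc_mul g h : tc (sol_mul g h) = tc g + tc h.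
Proof. destruct g as [[? ?] ?], h as [[? ?] ?]; reflexivity. Qed.

Section Cover.
Variables (Gam K : Sol -> Prop) (M : R) (reps : list Sol).
Hypothesis HM : forall k, K k -> sol_dist sol_one k <= M.
Hypothesis Hcov : forall g, exists k gam, K k /\ Gam gam /\ g = sol_mul k gam.

Lemma C1 : (forall gam, Gam gam -> exists r l, In r reps /\ tc l = 0 /\ gam = sol_mul r l) -> False.
Proof.
  intros H.
  set (S := sumf (fun r => Rabs (tc r)) reps).
  destruct (Hcov (0, 0, M + S + 1)) as (k & gam & Hk & Hg & E).
  destruct (H gam Hg) as (r & l & Hr & Hl & ->).
  apply (f_equal tc) in E. rewrite !tc_mul, Hl in E. simpl in E.
  destruct (bound_coords K M k HM Hk) as [_ Ht].
  assert (Rabs (tc r) <= S) by (apply (sumf_in (fun r => Rabs (tc r))); auto; intros; apply Rabs_pos).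
  apply Rabs_def2b in Ht. apply Rabs_def2b in H0. lra.
Qed.

Lemma C2 (al : R) : (forall gam, Gam gam -> exists r l, In r reps /\
   xc l = al * (1 - exp (tc l)) /\ gam = sol_mul r l) -> False.
Proof.
  intros H.
  set (S := sumf (fun r => Rabs (xc r + exp (tc r) * al)) reps).
  set (X := M + exp M * S + 1).
  destruct (Hcov (X - al, 0, 0)) as (k & gam & Hk & Hg & E).
  destruct (H gam Hg) as (r & l & Hr & Hl & ->).
  assert (Ex := f_equal xc E). assert (Et := f_equal tc E).
  rewrite !xc_mul, Hl in Ex. rewrite !tc_mul in Et. simpl in Ex, Et.
  unfold xc in Ex at 1; simpl in Ex.
  assert (Key : X = xc k + exp (tc k) * (xc r + exp (tc r) * al)).
  { assert (exp (tc k) * (exp (tc r) * exp (tc l)) = 1).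
    { rewrite <- exp_plus, <- exp_plus, <- Et. apply exp_0. }
    assert (al * (exp (tc k) * (exp (tc r) * exp (tc l))) = al) by (rewrite H0; ring).
    lra. }
  destruct (bound_coords K M k HM Hk) as [Hx Ht].
  assert (Hc : Rabs (xc r + exp (tc r) * al) <= S)
    by (apply (sumf_in (fun r => Rabs (xc r + exp (tc r) * al))); auto; intros; apply Rabs_pos).
  assert (He : exp (tc k) <= exp M) by (apply exp_le'; apply Rabs_def2b in Ht; lra).
  assert (Rabs (exp (tc k) * (xc r + exp (tc r) * al)) <= exp M * S).
  { rewrite Rabs_mult, (Rabs_right (exp _)) by (left; apply exp_pos).
    apply Rmult_le_compat; auto. left; apply exp_pos. apply Rabs_pos. }
  apply Rabs_def2b in Hx. apply Rabs_def2b in H0. unfold X in Key. lra.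
Qed.

Lemma comm_x a l : sol_mul a l = sol_mul l a -> tc a <> 0 ->
  xc l = (xc a / (1 - exp (tc a))) * (1 - exp (tc l)).
Proof.
  intros E Ha. apply (f_equal xc) in E. rewrite !xc_mul in E.
  pose proof (exp_ne1 _ Ha). field_simplify_eq; auto. lra.
Qed.

Lemma comm_one a l : sol_mul a l = sol_mul l a -> tc a <> 0 -> tc l = 0 -> l = sol_one.
Proof.
  destruct a as [[xa ya] ta], l as [[x y] t]; unfold tc; simpl; intros E Ha ->.
  injection E; intros _ Ey Ex. rewrite exp_0 in Ex. rewrite Ropp_0, exp_0 in Ey.
  pose proof (exp_ne1 _ Ha). assert (ta <> 0 -> -ta <> 0) by lra.
  pose proof (exp_ne1 _ (H0 Ha)).
  assert (x = 0). { apply (Rmult_eq_reg_l (1 - exp ta)); auto. nra. }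
  assert (y = 0). { apply (Rmult_eq_reg_l (1 - exp (-ta))); auto. nra. }
  subst; reflexivity.
Qed.

Lemma core (A B : Sol -> Prop) :
  (forall gam, Gam gam -> exists r a b, In r reps /\ A a /\ B b /\ gam = sol_mul r (sol_mul a b)) ->
  (forall a b, A a -> B b -> sol_mul a b = sol_mul b a) ->
  forall a0, A a0 -> tc a0 <> 0 -> forall b, B b -> b = sol_one.
Proof.
  intros Hc Hcomm a0 Ha0 Ht0 b0 Hb0. apply NNPP; intro Hne.
  assert (Htb : tc b0 <> 0).
  { intro Z. apply Hne. apply (comm_one a0 b0); auto. }
  set (al := xc a0 / (1 - exp (tc a0))).
  assert (HB : forall b, B b -> xc b = al * (1 - exp (tc b))).
  { intros b Hb. apply comm_x; auto. }
  assert (Hal : xc b0 / (1 - exp (tc b0)) = al).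
  { rewrite (HB b0 Hb0). pose proof (exp_ne1 _ Htb). field; auto. }
  assert (HA : forall a, A a -> xc a = al * (1 - exp (tc a))).
  { intros a Ha. rewrite <- Hal. apply comm_x; auto. symmetry; auto. }
  apply (C2 al). intros gam Hg. destruct (Hc gam Hg) as (r & a & b & Hr & Ha & Hb & ->).
  exists r, (sol_mul a b). split; auto. split; auto.
  rewrite xc_mul, tc_mul, HA, HB, exp_plus by auto. ring.
Qed.
End Cover.

Lemma gmul_one_r (G : Group) (a : G) : gmul G a (gone G) = a.
Proof.
  assert (Hr : gmul G a (ginv G a) = gone G).
  { set (b := ginv G a).
    rewrite <- (gone_l G (gmul G a b)).
    rewrite <- (ginv_l G b) at 1.
    rewrite <- gassoc. rewrite (gassoc G b a b). unfold b at 2. rewrite ginv_l, gone_l.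
    apply ginv_l. }
  rewrite <- (ginv_l G a), gassoc, Hr. apply gone_l.
Qed.

Lemma sol_mul_one g : sol_mul g sol_one = g.
Proof. destruct g as [[x y] t]; unfold sol_mul, sol_one; f_equal; [f_equal|]; ring. Qed.

Theorem corollary3p7 (Gam : Sol -> Prop) :
  cocompact_lattice Gam -> not_presentable_by_product Gam.
Proof.
  intros (Hsub & _ & K & [_ [M HM]] & Hcov).
  split.
  - intros [l Hl]. apply (C1 Gam K M l HM Hcov).
    intros gam Hg. exists gam, sol_one. split; auto. split. reflexivity.
    symmetry; apply sol_mul_one.
  - intros G1 G2 phi [Hin Hhom] [reps [Hreps Hfi]].
    set (A := fun g => exists a : G1, g = phi (a, gone G2)).
    set (B := fun g => exists b : G2, g = phi (gone G1, b)).
    assert (Hsplit : forall a b, phi (a, b) = sol_mul (phi (a, gone G2)) (phi (gone G1, b))).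
    { intros a b. rewrite <- Hhom, gmul_one_r, gone_l. reflexivity. }
    assert (Hcomm : forall x y, A x -> B y -> sol_mul x y = sol_mul y x).
    { intros x y [a ->] [b ->]. rewrite <- !Hhom, !gmul_one_r, !gone_l. reflexivity. }
    assert (Hc : forall gam, Gam gam -> exists r a b, In r reps /\ A a /\ B b /\
                    gam = sol_mul r (sol_mul a b)).
    { intros gam Hg. destruct (Hfi gam Hg) as (r & [a b] & Hr & ->).
      exists r, (phi (a, gone G2)), (phi (gone G1, b)). repeat split; auto.
      exists a; auto. exists b; auto. rewrite <- Hsplit. reflexivity. }
    assert (Hc' : forall gam, Gam gam -> exists r b a, In r reps /\ B b /\ A a /\
                    gam = sol_mul r (sol_mul b a)).
    { intros gam Hg. destruct (Hc gam Hg) as (r & a & b & Hr & Ha & Hb & ->).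
      exists r, b, a. split; [auto|split; [auto|split; [auto|]]]. rewrite (Hcomm a b Ha Hb). reflexivity. }
    destruct (classic (exists a0, A a0 /\ tc a0 <> 0)) as [[a0 [Ha0 Ht0]]|Hn1].
    + right. exists (sol_one :: nil). intros g Hg. left. symmetry.
      eapply (core Gam K M reps HM Hcov A B Hc Hcomm a0 Ha0 Ht0). exact Hg.
    + destruct (classic (exists b0, B b0 /\ tc b0 <> 0)) as [[b0 [Hb0 Ht0]]|Hn2].
      * left. exists (sol_one :: nil). intros g Hg. left. symmetry.
        eapply (core Gam K M reps HM Hcov B A Hc'); eauto.
        intros x y Hx Hy. symmetry; auto.
      * exfalso. apply (C1 Gam K M reps HM Hcov).
        intros gam Hg. destruct (Hc gam Hg) as (r & a & b & Hr & Ha & Hb & ->).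
        exists r, (sol_mul a b). split; auto. split; auto.
        rewrite tc_mul.
        assert (tc a = 0) by (apply NNPP; intro; apply Hn1; eauto).
        assert (tc b = 0) by (apply NNPP; intro; apply Hn2; eauto). lra.
Qed.
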